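(* Let $K$ be a field of characteristic $p>0$ with $[K:K^p]<\infty$, and let $D$ be a derivation of $K$ of order $p^n$. Then the field extension $K/K^D$ has degree $p^n$, there exists $t\in K$ with $D(t)=1$, and $\mathrm{Im}(D^i)=\ker(D^{p^n-i})$ for every $i=1,\dots,p^n$.
   Context: $K^D=\{x\in K\mid D(x)=0\}$, a subfield of $K$ over which $D$ is linear. A derivation $D$ of $K$ has order $r$ if it is nilpotent of index $r$, i.e. $D^r=0$ and $D^{r-1}\neq0$. *)

(* Defs.v *)
From HB Require Import structures.
From mathcomp Require Import all_boot all_order all_algebra.
Set Implicit Arguments. Unset Strict Implicit. Unset Printing Implicit Defensive.
Import GRing.Theory.
Local Open Scope ring_scope.

Definition spans_over (K : fieldType) (S : K -> Prop) (s : seq K) : Prop :=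
  forall x : K, exists c : seq K,
    size c = size s /\ (forall i, S c`_i) /\
    x = \sum_(i < size s) c`_i * s`_i.

Definition free_over (K : fieldType) (S : K -> Prop) (s : seq K) : Prop :=
  forall c : seq K, size c = size s -> (forall i, S c`_i) ->
    \sum_(i < size s) c`_i * s`_i = 0 -> forall i, c`_i = 0.

Definition finite_degree_over (K : fieldType) (S : K -> Prop) : Prop :=
  exists s : seq K, spans_over S s.

Definition degree_over_eq (K : fieldType) (S : K -> Prop) (d : nat) : Prop :=
  exists s : seq K, size s = d /\ free_over S s /\ spans_over S s.

Definition pth_powers (K : fieldType) (p : nat) : K -> Prop :=
  fun x => exists y : K, x = y ^+ p.

Definition derivation (K : fieldType) (D : K -> K) : Prop :=
  (forall x y, D (x + y) = D x + D y) /\ (forall x y, D (x * y) = D x * y + x * D y).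

Definition constants (K : fieldType) (D : K -> K) : K -> Prop := fun x => D x = 0.

Definition has_order (K : fieldType) (D : K -> K) (r : nat) : Prop :=
  (forall x, iter r D x = 0) /\ ~ (forall x, iter r.-1 D x = 0).

(* Main.v *)
Require Import Defs.
From HB Require Import structures.
From mathcomp Require Import all_boot all_order all_algebra.
From Stdlib Require Import Classical.
From mathcomp Require Import zify.
Import GRing.Theory.
Local Open Scope ring_scope.

Section Aux.
Variables (K : fieldType) (D : K -> K).
Hypothesis hD : derivation D.

Lemma D0 : D 0 = 0.
Proof. case: hD => hA _; have := hA 0 0; rewrite addr0 => /eqP.
by rewrite -subr_eq subrr eq_sym => /eqP. Qed.

Lemma D1 : D 1 = 0.
Proof. case: hD => _ hM; have := hM 1 1; rewrite !mul1r mulr1 => /eqP.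
by rewrite -subr_eq subrr eq_sym => /eqP. Qed.

Lemma iterD0 k : iter k D 0 = 0.
Proof. by elim: k => //= k ->; rewrite D0. Qed.

Lemma iterDadd k x y : iter k D (x + y) = iter k D x + iter k D y.
Proof. case: hD => hA _; by elim: k => //= k ->; rewrite hA. Qed.

Lemma iterDscal k a z : D a = 0 -> iter k D (a * z) = a * iter k D z.
Proof. move=> Ha; case: hD => _ hM; elim: k => //= k ->.
by rewrite hM Ha mul0r add0r. Qed.

Lemma iterDsum k r (F : 'I_r -> K) :
  iter k D (\sum_(i < r) F i) = \sum_(i < r) iter k D (F i).
Proof. exact: (big_morph (iter k D) (iterDadd k) (iterD0 k)). Qed.

Lemma Dinv c : D c = 0 -> c != 0 -> D c^-1 = 0.
Proof.
move=> Hc Hc0; case: hD => _ hM; have := hM c c^-1.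
rewrite divff // D1 Hc mul0r add0r => /esym/eqP; rewrite mulf_eq0 (negbTE Hc0) /=.
by move/eqP.
Qed.

Variables (r : nat) (e : K).
Hypothesis hr : forall x, iter r D x = 0.
Hypothesis he : iter r.-1 D e = 1.
Hypothesis hr0 : (0 < r)%N.

Lemma iter_ge j y : (r <= j)%N -> iter j D y = 0.
Proof. move=> Hj; rewrite -(subnK Hj) iterD hr iterD0 //. Qed.

Lemma im_ker k : (k <= r)%N -> forall x, iter k D x = 0 -> exists y, x = iter (r - k) D y.
Proof.
elim: k => [|k IH] Hk x Hx.
  by exists 0; rewrite /= in Hx; rewrite Hx iterD0.
set a := iter k D x.
have Ha : D a = 0 by rewrite /a -iterS.
set b := iter (r - k.+1) D e.
have Hb : iter k D b = 1 by rewrite /b -iterD -he; congr iter; lia.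
have Hz : iter k D (x - a * b) = 0.
  have := iterDadd k (x - a * b) (a * b); rewrite subrK iterDscal // Hb mulr1.
  by rewrite -/a => /eqP; rewrite -subr_eq subrr eq_sym => /eqP.
have [y Hy] := IH (ltnW Hk) _ Hz.
exists (D y + a * e); rewrite iterDadd iterDscal // -/b -iterSr.
have -> : (r - k.+1).+1 = (r - k)%N by lia.
by rewrite -Hy subrK.
Qed.

Lemma span_ind k : (k <= r)%N -> forall x, iter k D x = 0 ->
  exists f : nat -> K, (forall i, D (f i) = 0) /\
     x = \sum_(i < r) f i * iter i D e.
Proof.
elim: k => [|k IH] Hk x Hx.
  exists (fun _ => 0); split=> [i|]; first exact: D0.
  by rewrite /= in Hx; rewrite Hx big1 // => i _; rewrite mul0r.
set a := iter k D x.
have Ha : D a = 0 by rewrite /a -iterS.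
set m := (r - k.+1)%N.
set b := iter m D e.
have Hb : iter k D b = 1 by rewrite /b -iterD -he; congr iter; rewrite /m; lia.
have Hz : iter k D (x - a * b) = 0.
  have := iterDadd k (x - a * b) (a * b); rewrite subrK iterDscal // Hb mulr1.
  by rewrite -/a => /eqP; rewrite -subr_eq subrr eq_sym => /eqP.
have [f [Hf Hfx]] := IH (ltnW Hk) _ Hz.
have Hm : (m < r)%N by rewrite /m; lia.
exists (fun i => f i + (if i == m then a else 0)); split.
  move=> i; case: hD => hA _; rewrite hA Hf add0r; case: ifP => _ //; exact: D0.
rewrite (_ : x = (x - a * b) + a * b); last by rewrite subrK.
rewrite Hfx.
under [in RHS]eq_bigr do rewrite mulrDl.
rewrite big_split /=; congr (_ + _).
rewrite (bigD1 (Ordinal Hm)) //= eqxx big1 ?addr0 // => i Hi.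
have -> : (nat_of_ord i == m) = false.
  by apply/negbTE; apply: contra Hi => /eqP Hi; apply/eqP/val_inj.
by rewrite mul0r.
Qed.

End Aux.
Arguments D0 {K D}.
Arguments D1 {K D}.
Arguments iterD0 {K D}.
Arguments iterDadd {K D}.
Arguments iterDscal {K D}.
Arguments iterDsum {K D}.
Arguments Dinv {K D}.
Arguments iter_ge {K D}.
Arguments im_ker {K D}.
Arguments span_ind {K D}.

Theorem lemma4p3 (K : fieldType) (p n : nat) (D : K -> K) :
  p \in [pchar K] ->
  finite_degree_over (@pth_powers K p) ->
  (0 < n)%N ->
  derivation D ->
  has_order D (p ^ n) ->
  [/\ degree_over_eq (constants D) (p ^ n),
      exists t : K, D t = 1
    & forall i : nat, (1 <= i <= p ^ n)%N ->
        forall x : K, (exists y : K, x = iter i D y) <-> iter (p ^ n - i) D x = 0].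
Proof.
move=> Hp _ Hn hD [hr hnz].
have Hp2 : (2 <= p)%N by apply: prime_gt1; exact: pcharf_prime Hp.
have Hr2 : (2 <= p ^ n)%N.
  case: n Hn {hr hnz} => // n' _; rewrite expnS.
  have H : (0 < p ^ n')%N by rewrite expn_gt0 (leq_trans _ Hp2).
  exact: leq_trans Hp2 (leq_pmulr p H).
set r := (p ^ n)%N in hr hnz Hr2 *.
have hr0 : (0 < r)%N by apply: leq_trans _ Hr2.
have [y Hy] := not_all_ex_not _ _ hnz.
set c := iter r.-1 D y in Hy.
have Hc : D c = 0 by rewrite /c -iterS (ltn_predK hr0).
have Hc0 : c != 0 by apply/eqP.
set e := c^-1 * y.
have he : iter r.-1 D e = 1.
  by rewrite /e (iterDscal hD _ _ _ (Dinv hD _ Hc Hc0)) -/c mulVf.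
split.
- set s := mkseq (fun j => iter j D e) r.
  have Hs : size s = r by rewrite size_mkseq.
  exists s; split => //; split.
  + move=> cs Hcs Hcc Hsum.
    have key : forall m, (m <= r)%N -> forall j, (j < m)%N -> cs`_j = 0.
      elim=> [//|m IH] Hm j Hj.
      have IH' := IH (ltnW Hm).
      rewrite ltnS leq_eqVlt in Hj; case/orP: Hj => [/eqP ->|]; last exact: IH'.
      have := congr1 (iter (r.-1 - m) D) Hsum.
      rewrite (iterD0 hD) (iterDsum hD).
      move: (Hsum) => _.
      have E : forall i : 'I_(size s), iter (r.-1 - m) D (cs`_i * s`_i)
                 = cs`_i * iter (r.-1 - m + i) D e.
        move=> i; rewrite (iterDscal hD _ _ _ (Hcc i)).
        by rewrite nth_mkseq -?Hs // iterD.
      under eq_bigr do rewrite E.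
      have Hm' : (m < size s)%N by rewrite Hs.
      rewrite (bigD1 (Ordinal Hm')) //= big1 ?addr0.
        have -> : (r.-1 - m + m = r.-1)%N by lia.
        by rewrite he mulr1; apply: id.
      move=> i Hi; have Hi' : (nat_of_ord i != m).
        by apply: contra Hi => /eqP Hi; apply/eqP/val_inj.
      case: (ltngtP i m) Hi' => // Hlt _.
        by rewrite IH' ?mul0r.
      by rewrite (iter_ge hD _ hr) ?mulr0 //; lia.
    move=> j; case: (ltnP j r) => Hj.
      exact: (key r (leqnn r)).
    by rewrite nth_default // Hcs Hs.
  + move=> x.
    have [f [Hf Hfx]] := span_ind hD _ _ he hr0 _ (leqnn r) x (hr x).
    exists (mkseq f r); split; first by rewrite size_mkseq.
    split.
      move=> i; rewrite /constants; case: (ltnP i r) => Hi.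
        by rewrite nth_mkseq.
      by rewrite nth_default ?size_mkseq // (D0 hD).
    rewrite Hfx /s size_mkseq.
    by apply: eq_bigr => i _; rewrite !nth_mkseq.
- exists (iter r.-2 D e); rewrite -iterS.
  by have -> : (r.-2).+1 = r.-1 by lia.
- move=> i /andP [Hi1 Hi2] x; split.
    by move=> [z ->]; rewrite -iterD subnK.
  move=> Hx; have [z Hz] := im_ker hD _ _ he hr0 _ (leq_subr i r) _ Hx.
  by exists z; rewrite Hz subKn.
Qed.
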